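(* For $n\ge 3$, $a(n,1)=a(n-1,1)+n-1$.
   Context: For $n\ge 2$, $A_n$ is the alternating group on $\{1,\dots,n\}$, $T(A_n)=\{(1\,2)(i\,j)\mid 1\le i<j\le n\}$ (a generating set of $A_n$; note $(1\,2)(1\,2)=e$), and for $v\in A_n$, $\ell_{T(A_n)}(v)=\min\{k\ge 0\mid v=t_1\cdots t_k,\ t_i\in T(A_n)\}$. $a(n,m)$ denotes the number of $v\in A_n$ with $\ell_{T(A_n)}(v)=m$. *)

(* Defs.v *)
From HB Require Import structures.
Set Warnings "-notation-overridden".
From mathcomp Require Import all_boot all_order all_fingroup all_solvable.
Set Implicit Arguments. Unset Strict Implicit. Unset Printing Implicit Defensive.
Local Open Scope group_scope.

(* Points {1,...,n} are represented by 'I_n = {0,...,n-1}; the paper's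
   point 1 is the ordinal with value 0 and point 2 the one with value 1. *)

Definition An (n : nat) : {set {perm 'I_n}} := 'Alt_('I_n).

Definition TA (n : nat) : {set {perm 'I_n}} :=
  [set v | [exists p : 'I_n, exists q : 'I_n, exists i : 'I_n, exists j : 'I_n,
     [&& nat_of_ord p == 0%N, nat_of_ord q == 1%N, (i < j)%N
       & v == tperm p q * tperm i j]]].

Definition prodT (n k : nat) (v : {perm 'I_n}) : bool :=
  [exists s : k.-tuple {perm 'I_n},
     all (fun t => t \in TA n) s && (v == \prod_(t <- s) t)].

Definition lengthT_eq (n : nat) (v : {perm 'I_n}) (m : nat) : bool :=
  prodT m v && [forall k : 'I_m, ~~ prodT k v].

Definition a (n m : nat) : nat :=
  #|[set v in An n | lengthT_eq v m]|.

(* Main.v *)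
Require Import Defs.
From mathcomp Require Import all_boot all_order all_fingroup all_solvable.
From mathcomp Require Import zify.

Local Open Scope group_scope.

Lemma prodT0 n (v : {perm 'I_n}) : prodT 0 v = (v == 1).
Proof.
apply/existsP/eqP => [[s /andP[_ /eqP ->]]|->].
  by rewrite tuple0 big_nil.
by exists [tuple]; rewrite /= big_nil.
Qed.

Lemma prodT1 n (v : {perm 'I_n}) : prodT 1 v = (v \in TA n).
Proof.
apply/existsP/idP => [[s /andP[Hs /eqP ->]]|Hv].
  case/tupleP: s Hs => x s; rewrite tuple0 /= big_cons big_nil mulg1.
  by rewrite andbT.
by exists [tuple v]; rewrite /= andbT Hv big_cons big_nil mulg1 eqxx.
Qed.

Lemma lengthT1 n (v : {perm 'I_n}) : lengthT_eq v 1 = (v \in TA n) && (v != 1).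
Proof.
rewrite /lengthT_eq prodT1; congr (_ && _).
apply/forallP/idP => [H|Hv k].
  by have := H ord0; rewrite prodT0.
by rewrite ord1 prodT0.
Qed.

Lemma TA_alt n (v : {perm 'I_n}) : v \in TA n -> v \in An n.
Proof.
rewrite inE => /existsP[p /existsP[q /existsP[i /existsP[j]]]].
case/and4P => /eqP Hp /eqP Hq Hij /eqP ->.
rewrite /An Alt_even odd_mul_tperm odd_tperm.
have -> : p != q by apply/eqP => E; move: Hp; rewrite E Hq.
have -> : i != j by apply/eqP => E; move: Hij; rewrite E ltnn.
by [].
Qed.

Lemma a_eq n : a n 1 = #|TA n :\ 1|.
Proof.
rewrite /a; apply: eq_card => v; rewrite in_setD1 in_set lengthT1.
case H: (v \in TA n); last by rewrite !andbF.
by rewrite (@TA_alt _ _ H) andbC.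
Qed.

Section S.
Variable m : nat.
Let n := m.+2.
Let p : 'I_n := ord0.
Let q : 'I_n := inord 1.
Let D := [set t : 2.-tuple 'I_n | sorted ltn [seq val i | i <- t]].
Let f (t : 2.-tuple 'I_n) := tperm p q * tperm (tnth t ord0) (tnth t ord_max).

Lemma qval : val q = 1%N.
Proof. exact: (@inordK m.+1 1). Qed.

Lemma TA_im : TA n = f @: D.
Proof.
apply/setP => v; apply/idP/imsetP.
  rewrite inE => /existsP[p' /existsP[q' /existsP[i /existsP[j]]]].
  case/and4P => /eqP Hp /eqP Hq Hij /eqP ->.
  have -> : p' = p by apply: val_inj.
  have -> : q' = q by apply: val_inj; rewrite qval.
  exists [tuple i; j]; first by rewrite inE /= Hij.
  by rewrite /f.
case=> t; rewrite inE => Ht ->; rewrite inE.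
apply/existsP; exists p; apply/existsP; exists q.
apply/existsP; exists (tnth t ord0); apply/existsP; exists (tnth t ord_max).
rewrite qval /= eqxx andbT.
case/tupleP: t Ht => x t; case/tupleP: t => y t; rewrite tuple0.
by rewrite /= andbT.
Qed.

Lemma tperm_inj (i j k l : 'I_n) : (i < j)%N -> (k < l)%N ->
  tperm i j = tperm k l -> i = k /\ j = l.
Proof.
move=> Hij Hkl E.
have Ei := congr1 (fun s : {perm 'I_n} => s i) E.
have Ej := congr1 (fun s : {perm 'I_n} => s j) E.
move: Ei Ej; rewrite /= tpermL tpermR.
rewrite !permE /=.
case: (eqVneq i k) => Hik; case: (eqVneq i l) => Hil;
case: (eqVneq j k) => Hjk; case: (eqVneq j l) => Hjl => //=.
all: try (by move=> *; subst; move: Hij; rewrite ltnn).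
all: try (by move=> *; subst; move: Hkl; rewrite ltnn).
all: move=> *; subst.
by have := ltn_trans Hij Hkl; rewrite ltnn.
Qed.

Lemma f_inj : {in D &, injective f}.
Proof.
move=> t u; rewrite !inE => Ht Hu /mulgI E.
case/tupleP: t Ht E => x t; case/tupleP: t => y t; rewrite tuple0.
case/tupleP: u Hu => x' u; case/tupleP: u => y' u; rewrite tuple0.
rewrite /= !andbT => Hxy Hxy' E.
have [-> ->] := @tperm_inj x y x' y' Hxy' Hxy E.
by [].
Qed.

Lemma card_TA : #|TA n| = 'C(n, 2).
Proof.
by rewrite TA_im (card_in_imset f_inj) card_ltn_sorted_tuples.
Qed.

Lemma one_TA : (1 : {perm 'I_n}) \in TA n.
Proof.
rewrite TA_im; apply/imsetP; exists [tuple p; q].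
  by rewrite inE /= qval.
by rewrite /f /= -{2}(mulg1 (tperm p q)) tpermKg.
Qed.

Lemma a_val : a n 1 = 'C(n, 2) - 1.
Proof.
rewrite a_eq; have := cardsD1 1 (TA n); rewrite one_TA card_TA add1n => ->.
by rewrite subn1.
Qed.
End S.

Theorem proposition5p2 (n : nat) (hn : 3 <= n) : a n 1 = a n.-1 1 + n.-1.
Proof.
case: n hn => [|[|[|m]]] // _.
rewrite /= (a_val m.+1) (a_val m) binS bin1.
have : (0 < 'C(m.+2, 2))%N by rewrite bin_gt0.
lia.
Qed.
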